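(* Let $M$ be an $N\times N$ and $N_0$ an $r\times N$ complex matrix. If the series $\sum_{m=0}^\infty N_0M^m$ converges, then $N_0M^m=N_0\widetilde M^m$ for every $m\ge0$.
   Context: For a square complex matrix $M$ with Jordan decomposition $M=SJS^{-1}$, where $S$ is nonsingular and $J=\mathrm{diag}(J_{n_1}(\lambda_1),\dots,J_{n_k}(\lambda_k))$ with $J_{n_i}(\lambda_i)$ the $n_i\times n_i$ Jordan block for eigenvalue $\lambda_i$, define $\widetilde M=S\widetilde JS^{-1}$, where $\widetilde J=\mathrm{diag}(J^1,\dots,J^k)$ with $J^i=0_{n_i\times n_i}$ if $|\lambda_i|\ge1$ and $J^i=J_{n_i}(\lambda_i)$ otherwise. *)

(* Defs.v *)
(* Complex numbers are modelled by an arbitrary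
   numClosedFieldType C. *)
From HB Require Import structures.
From mathcomp Require Import all_boot all_order all_algebra.
Unset Printing Implicit Defensive.
Import Order.TTheory GRing.Theory Num.Theory.
Local Open Scope ring_scope.

Definition jordan_block (C : nzRingType) (n : nat) (lam : C) : 'M[C]_n :=
  \matrix_(i < n, j < n) (lam *+ (i == j :> nat) + (j == i.+1 :> nat)%:R).

Definition jordan_mx (C : nzRingType) (N k : nat) (n_ : 'I_k -> nat) (lam : 'I_k -> C)
    (eqN : (\sum_(i < k) n_ i)%N = N) : 'M[C]_N :=
  castmx (eqN, eqN) (mxdiag (fun i => @jordan_block C (n_ i) (lam i))).

Definition jordan_mx_tilde (C : numDomainType) (N k : nat) (n_ : 'I_k -> nat)
    (lam : 'I_k -> C) (eqN : (\sum_(i < k) n_ i)%N = N) : 'M[C]_N :=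
  castmx (eqN, eqN)
    (mxdiag (fun i => if 1 <= `|lam i| then 0 else @jordan_block C (n_ i) (lam i))).

(* Convergence of the matrix series sum_{m>=0} A m (entrywise, equivalently in norm). *)
Definition series_converges (C : numFieldType) (p q : nat) (A : nat -> 'M[C]_(p, q)) : Prop :=
  exists L : 'M[C]_(p, q), forall eps : C, 0 < eps ->
    exists K : nat, forall n : nat, (K <= n)%N ->
      forall (i : 'I_p) (j : 'I_q), `|(\sum_(m < n) A m - L) i j| < eps.

(* Main.v *)
Require Import Defs.
From HB Require Import structures.
From mathcomp Require Import all_boot all_order all_algebra.
From mathcomp Require Import ring.
Import Order.TTheory GRing.Theory Num.Theory.
Local Open Scope ring_scope.

Definition tozero (C : numFieldType) (p q : nat) (A : nat -> 'M[C]_(p, q)) : Prop :=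
  forall eps : C, 0 < eps -> exists K : nat, forall n : nat, (K <= n)%N ->
      forall (i : 'I_p) (j : 'I_q), `|A n i j| < eps.
Arguments tozero {C p q}.

Lemma series_tozero (C : numFieldType) (p q : nat) (A : nat -> 'M[C]_(p, q)) :
  @series_converges C p q A -> tozero A.
Proof.
move=> [L HL] eps eps0.
have e2 : 0 < eps / 2 by rewrite divr_gt0.
have [K HK] := HL _ e2.
exists K => n Kn i j.
have -> : A n i j = (\sum_(m < n.+1) A m - L) i j - (\sum_(m < n) A m - L) i j.
  by rewrite big_ord_recr /= !mxE; ring.
apply: (le_lt_trans (ler_normB _ _)).
rewrite [eps](splitr eps); apply: ltrD; apply: HK => //; exact: leqW.
Qed.

Lemma tozero_mulr (C : numFieldType) (p q s : nat) (A : nat -> 'M[C]_(p, q))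
  (S : 'M[C]_(q, s)) : tozero A -> tozero (fun m => A m *m S).
Proof.
move=> HA eps eps0.
set B := 1 + \sum_j \sum_k `|S k j|.
have B0 : 0 < B by apply: ltr_pwDl => //; rewrite sumr_ge0 // => j _; rewrite sumr_ge0.
have [K HK] := HA (eps / B) (divr_gt0 eps0 B0).
exists K => n Kn i j; rewrite mxE.
apply: (le_lt_trans (ler_norm_sum _ _ _)).
apply: (le_lt_trans (y := \sum_k eps / B * `|S k j|)).
  apply: ler_sum => k _; rewrite normrM ler_wpM2r //.
  exact/ltW/HK.
rewrite -mulr_sumr.
have Hs : \sum_k `|S k j| < B.
  rewrite /B (bigD1 j) //=; apply: ltr_pwDl => //; rewrite lerDl.
  by rewrite sumr_ge0 // => j' _; rewrite sumr_ge0.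
apply: (lt_le_trans (y := eps / B * B)).
  by rewrite ltr_pM2l // divr_gt0.
by rewrite divfK ?gt_eqF.
Qed.

Lemma block_step (C : numFieldType) n (lam : C) r (X : 'M[C]_(r,n)) a (i0 j : 'I_n) :
  (forall k : 'I_n, (k < i0)%N -> X a k = 0) -> (j <= i0)%N ->
  (X *m @jordan_block C n lam) a j = X a j * lam.
Proof.
move=> HX ji.
rewrite mxE (bigD1 j) //= big1 ?addr0.
  by rewrite !mxE eqxx (ltn_eqF (ltnSn j)) addr0.
move=> k kj; case: (ltnP k i0) => [kl|ge]; first by rewrite HX // mul0r.
have e1 : (k == j :> nat) = false by apply/negbTE.
have e2 : (j == k.+1 :> nat) = false.
  by apply: ltn_eqF; rewrite ltnS (leq_trans ji ge).
by rewrite !mxE e1 e2 addr0 mulr0.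
Qed.

Lemma block_pow (C : numFieldType) n (lam : C) r (p : 'M[C]_(r,n)) a (i0 : 'I_n) :
  (forall k : 'I_n, (k < i0)%N -> p a k = 0) ->
  forall m (j : 'I_n), (j <= i0)%N ->
  (p *m (@jordan_block C n lam) ^+ m) a j = lam ^+ m * p a j.
Proof.
move=> Hp; elim => [|m IH] j ji.
  by rewrite expr0 mulmx1 mul1r.
rewrite exprSr.
have -> : forall A B : 'M[C]_n, A * B = A *m B by move=> A B; rewrite mulmxE.
rewrite mulmxA (@block_step _ _ _ _ _ _ i0) //.
  by rewrite IH // exprSr mulrAC.
by move=> k ki; rewrite IH ?Hp ?mulr0 // ltnW.
Qed.

Lemma block_zero (C : numFieldType) n (lam : C) r (p : 'M[C]_(r,n)) :
  1 <= `|lam| -> tozero (fun m => p *m (@jordan_block C n lam) ^+ m) -> p = 0.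
Proof.
move=> hl Hz; apply/matrixP => a j.
suff H : forall i0 : nat, forall k : 'I_n, (k < i0)%N -> p a k = 0.
  by rewrite mxE; apply: (H j.+1).
elim => [|i0 IH] k //; rewrite ltnS leq_eqVlt => /orP [/eqP ek| kl]; last exact: IH.
case: (eqVneq (p a k) 0) => // nz; exfalso.
have hyp : forall k' : 'I_n, (k' < k)%N -> p a k' = 0 by move=> k' h; apply: IH; rewrite -ek.
have [K HK] := Hz `|p a k| (ltac:(by rewrite normr_gt0)).
have := HK K (leqnn K) a k.
rewrite (@block_pow _ _ _ _ _ _ _ hyp K k (leqnn k)) normrM normrX.
have h : `|p a k| <= `|lam| ^+ K * `|p a k| by rewrite ler_peMl // exprn_ege1.
by move=> lt; have := le_lt_trans h lt; rewrite ltxx.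
Qed.

Lemma tozero_ext (C : numFieldType) (p q : nat) (A B : nat -> 'M[C]_(p, q)) :
  (forall m, A m = B m) -> tozero A -> tozero B.
Proof.
move=> e HA eps eps0; have [K HK] := HA eps eps0.
by exists K => n Kn i j; rewrite -e; apply: HK.
Qed.

Lemma tozero_row (C : numFieldType) (k r : nat) (n_ : 'I_k -> nat)
  (Q : nat -> forall i, 'M[C]_(r, n_ i)) (i : 'I_k) :
  tozero (fun m => mxrow (Q m)) -> tozero (fun m => Q m i).
Proof.
move=> HA eps eps0; have [K HK] := HA eps eps0.
exists K => n Kn a t.
have := congr1 (fun X : 'M[C]_(r, n_ i) => X a t) (mxrowK (Q n) i); rewrite mxE /= => <-.
exact: HK.
Qed.

Lemma mxdiag_pow (C : comNzRingType) k (n_ : 'I_k -> nat) r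
  (P : 'M[C]_(r, \sum_i n_ i)) (D : forall i, 'M[C]_(n_ i)) m :
  P *m (mxdiag D) ^+ m = mxrow (fun i => submxrow P i *m (D i) ^+ m).
Proof.
have mE : forall n (A B : 'M[C]_n), A * B = A *m B by move=> n A B; rewrite mulmxE.
elim: m => [|m IH].
  rewrite expr0 mulmx1 -{1}(submxrowK P); apply: eq_mxrow => i.
  by rewrite expr0 mulmx1.
rewrite exprSr mE mulmxA IH mul_mxrow_mxdiag; apply: eq_mxrow => i.
by rewrite exprSr mE mulmxA.
Qed.

Lemma conj_pow (C : comUnitRingType) n (S A : 'M[C]_n) m :
  S \in unitmx -> (S *m A *m invmx S) ^+ m = S *m A ^+ m *m invmx S.
Proof.
have mE : forall (A B : 'M[C]_n), A * B = A *m B by move=> A' B; rewrite mulmxE.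
move=> Su; elim: m => [|m IH].
  by rewrite !expr0 mulmx1 mulmxV.
rewrite exprSr mE IH exprSr mE !mulmxA mulmxKV //.
Qed.

Theorem lemmaA1 (C : numClosedFieldType) (r N : nat) (M : 'M[C]_N) (N0 : 'M[C]_(r, N))
  (k : nat) (n_ : 'I_k -> nat) (lam : 'I_k -> C) (eqN : (\sum_(i < k) n_ i)%N = N)
  (S : 'M[C]_N) :
  S \in unitmx ->
  M = S *m @jordan_mx C N k n_ lam eqN *m invmx S ->
  @series_converges C r N (fun m => N0 *m M ^+ m) ->
  forall m : nat,
    N0 *m M ^+ m = N0 *m (S *m @jordan_mx_tilde C N k n_ lam eqN *m invmx S) ^+ m.
Proof.
move=> Su HM Hc m; subst M.
move: S N0 Su Hc; case: N / eqN => S N0 Su Hc.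
rewrite /jordan_mx /jordan_mx_tilde !castmx_id in Hc *.
rewrite !conj_pow // !mulmxA; congr (_ *m _).
have Z := @tozero_mulr _ _ _ _ _ S (@series_tozero _ _ _ _ Hc).
have Z' : tozero (fun m => N0 *m S *m (mxdiag (fun i => @jordan_block C (n_ i) (lam i))) ^+ m).
  apply: (@tozero_ext _ _ _ _ _ _ Z) => m'.
  by rewrite /= conj_pow // !mulmxA mulmxKV.
rewrite !mxdiag_pow; apply: eq_mxrow => i /=.
case: ifP => // hl.
have Zi := @tozero_row _ _ _ _ _ i (@tozero_ext _ _ _ _ _ (fun m' => @mxdiag_pow _ _ _ _ (N0 *m S) _ m') Z').
by rewrite (@block_zero _ _ _ _ _ hl Zi) !mul0mx.
Qed.
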